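(* Let $(X,\le)$ be a globally hyperbolic poset. Then $X$, equipped with its interval topology, is a locally compact Hausdorff space. Moreover: (i) the Lawson topology of $X$ is contained in the interval topology; (ii) the partial order $\le$ is a closed subset of $X\times X$ (with the product of the interval topologies); (iii) every directed subset of $X$ that has an upper bound has a supremum; (iv) every filtered subset of $X$ that has a lower bound has an infimum.
   Context: For a poset $(P,\sqsubseteq)$: a nonempty $S\subseteq P$ is directed if any two elements of $S$ have an upper bound in $S$, and filtered if any two elements of $S$ have a lower bound in $S$; $\bigsqcup S$ and $\bigwedge S$ denote the supremum and infimum of $S$ when they exist. Write $\uparrow F=\{y:\exists x\in F,\ x\sqsubseteq y\}$. For $x,y\in P$, $x\ll y$ iff for every directed $S\subseteq P$ that has a supremum, $y\sqsubseteq\bigsqcup S$ implies $x\sqsubseteq s$ for some $s\in S$. Put $\Downarrow x=\{a: a\ll x\}$ and $\Uparrow x=\{a: x\ll a\}$. A basis of $P$ is a subset $B$ such that for every $x$, $B\cap\Downarrow x$ contains a directed set with supremum $x$; $P$ is continuous if it has a basis. A continuous poset $P$ is bicontinuous if (1) for all $x,y\in P$: $x\ll y$ iff for every filtered $S\subseteq P$ having an infimum, $\bigwedge S\sqsubseteq x$ implies $s\sqsubseteq y$ for some $s\in S$; and (2) for every $x$, $\Uparrow x$ is filtered with infimum $x$. On a bicontinuous poset the sets $(a,b)=\{x: a\ll x\ll b\}$ form a basis for a topology, called the interval topology. The Lawson topology on a continuous poset $P$ is the topology with basis all sets $\Uparrow x\setminus\uparrow F$ with $x\in P$ and $F\subseteq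 P$ finite. A globally hyperbolic poset is a bicontinuous poset $(X,\le)$ such that every closed interval $[a,b]=\{x: a\le x\le b\}$ is compact in the interval topology. *)

(* Defs.v *)
From HB Require Import structures.
From mathcomp Require Import all_boot all_order.
From mathcomp Require Import all_classical.
From mathcomp Require Import topology.

Set Implicit Arguments. Unset Strict Implicit. Unset Printing Implicit Defensive.
Import Order.TTheory.
Local Open Scope classical_set_scope.
Local Open Scope order_scope.

Section Posets.
Context {d : Order.disp_t} {X : porderType d}.
Implicit Types (S F : set X) (x y : X).

Definition directed S :=
  (exists x, S x) /\ forall x y, S x -> S y -> exists2 z, S z & x <= z /\ y <= z.

Definition filtered S :=
  (exists x, S x) /\ forall x y, S x -> S y -> exists2 z, S z & z <= x /\ z <= y.

Definition upset F : set X := [set y | exists2 x, F x & x <= y].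

Definition way_below x y :=
  forall S s, directed S -> supremums S s -> y <= s -> exists2 z, S z & x <= z.

Definition ddarrow x : set X := [set a | way_below a x].
Definition uuarrow x : set X := [set a | way_below x a].

Definition is_basis (B : set X) :=
  forall x, exists D, [/\ D `<=` B `&` ddarrow x, directed D & supremums D x].

Definition continuous_poset := exists B, is_basis B.

Definition bicontinuous :=
  [/\ continuous_poset,
      (forall x y, way_below x y <->
         (forall S i, filtered S -> infimums S i -> i <= x ->
            exists2 s, S s & s <= y))
    & (forall x, filtered (uuarrow x) /\ infimums (uuarrow x) x)].

Definition open_interval a b : set X := [set x | way_below a x /\ way_below x b].

Definition closed_interval a b : set X := [set x | a <= x /\ x <= b].

Definition lawson_basic : set (set X) :=
  [set U | exists x F, finite_set F /\ U = uuarrow x `\` upset F].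

Definition interval_basic : set (set X) :=
  [set U | exists a b, U = open_interval a b].

End Posets.

(* X equipped with the interval topology: the topology generated by the
   sets (a,b) *)
Definition interval_topology {d} (X : porderType d) : Type := X.
Definition lawson_topology {d} (X : porderType d) : Type := X.

Section Topologies.
Context {d : Order.disp_t} {X : porderType d}.
HB.instance Definition _ := Order.POrder.on (interval_topology X).
HB.instance Definition _ := @isSubBaseTopological.Build (interval_topology X)
  (set X) (@interval_basic d X) id.
HB.instance Definition _ := Order.POrder.on (lawson_topology X).
HB.instance Definition _ := @isSubBaseTopological.Build (lawson_topology X)
  (set X) (@lawson_basic d X) id.
End Topologies.

Definition globally_hyperbolic {d} (X : porderType d) :=
  @bicontinuous d X /\
  forall a b : X, compact (closed_interval a b : set (interval_topology X)).

(* Main.v *)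
Require Import Defs.
From HB Require Import structures.
From mathcomp Require Import all_boot all_order.
From mathcomp Require Import all_classical.
From mathcomp Require Import topology.
From mathcomp Require Import finmap.
Local Open Scope classical_set_scope.
Local Open Scope order_scope.
Import Order.TTheory.

Lemma wb_le {d} {X : porderType d} {a b : X} : way_below a b -> a <= b.
Proof.
move=> H.
have dir : directed [set b].
  split; first by exists b.
  by move=> x y -> ->; exists b.
have sup : supremums [set b] b.
  split; first by move=> y ->.
  by move=> v; apply.
by have [z -> //] := H [set b] b dir sup (le_refl b).
Qed.

Lemma ex_below {d} {X : porderType d} (x : X) :
  @bicontinuous d X -> exists a, way_below a x.
Proof.
case=> [[B hB] _ _]; have [D [sub [[a Da] _] _]] := hB x.
by exists a; have [] := sub a Da.
Qed.

Lemma ex_above {d} {X : porderType d} (x : X) :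
  @bicontinuous d X -> exists b, way_below x b.
Proof. by case=> _ _ /(_ x) [[[b hb] _] _]; exists b. Qed.

Lemma core_lem {d} {X : porderType d} (x y : X) : @bicontinuous d X -> ~ x <= y ->
  exists a b, [/\ way_below a x, way_below y b & ~ a <= b].
Proof.
move=> hb nxy.
have [[B hB] _ h3] := hb.
have [D [sub _ [ubD lbD]]] := hB x.
have [a [Da nay]] : exists a, D a /\ ~ a <= y.
  apply: contrapT => nex; apply: nxy; apply: lbD => a Da.
  by apply: contrapT => nay; apply: nex; exists a.
have [_ [lbU ubU]] := h3 y.
have [b [yb nab]] : exists b, way_below y b /\ ~ a <= b.
  apply: contrapT => nex; apply: nay; apply: ubU => b yb.
  by apply: contrapT => nab; apply: nex; exists b.
by exists a, b; split => //; have [] := sub a Da.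
Qed.

Lemma itv_open {d} {X : porderType d} (a b : X) :
  open (open_interval a b : set (interval_topology X)).
Proof.
exists [set open_interval a b].
  move=> _ ->; exists [fset (open_interval a b)]%fset.
    by move=> ?; rewrite !inE => /eqP ->; apply/mem_set; exists a, b.
  by rewrite bigcap_fset big_seq_fset1.
by rewrite bigcup_set1.
Qed.

Lemma itv_nbhs {d} {X : porderType d} (a b z : X) :
  way_below a z -> way_below z b ->
  nbhs (z : interval_topology X) (open_interval a b).
Proof. by move=> az zb; apply: open_nbhs_nbhs; split; [exact: itv_open|]. Qed.


Lemma N3 {d} {X : porderType d} (x y : X) : @bicontinuous d X -> ~ x <= y ->
  exists2 U, nbhs (x : interval_topology X) U &
  exists2 V, nbhs (y : interval_topology X) V &
    forall w1 w2 : X, U w1 -> V w2 -> ~ w1 <= w2.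
Proof.
move=> hb nxy; have [a [b [ax yb nab]]] := core_lem x y hb nxy.
have [e xe] := ex_above x hb; have [c cy] := ex_below y hb.
exists (open_interval a e); first exact: itv_nbhs.
exists (open_interval c b); first exact: itv_nbhs.
move=> w1 w2 [aw1 _] [_ w2b] w12; apply: nab.
have h1 := wb_le aw1; have h2 := wb_le w2b.
exact: (le_trans h1 (le_trans w12 h2)).
Qed.

Lemma hausdorffX {d} {X : porderType d} : @bicontinuous d X ->
  hausdorff_space (interval_topology X).
Proof.
move=> hb p q clu; apply: contrapT => npq.
have [h|h] : ~ (p : X) <= q \/ ~ (q : X) <= p.
  apply: contrapT => H; apply: npq; apply: le_anti; apply/andP; split.
    by apply: contrapT => H'; apply: H; left.
  by apply: contrapT => H'; apply: H; right.
- have [U hU [V hV H]] := N3 _ _ hb h.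
  have [w [Uw Vw]] := clu U V hU hV.
  exact: H Uw Vw (le_refl w).
- have [U hU [V hV H]] := N3 _ _ hb h.
  have [w [Vw Uw]] := clu V U hV hU.
  exact: H Uw Vw (le_refl w).
Qed.

Lemma order_closed {d} {X : porderType d} : @bicontinuous d X ->
  closed [set p : interval_topology X * interval_topology X | p.1 <= p.2].
Proof.
move=> hb [x y] clp; apply: contrapT => /= nxy.
have [U hU [V hV H]] := N3 x y hb nxy.
have nUV : nbhs (x, y) (U `*` V) by exists (U, V).
have [[w1 w2] [/= w12 [/= Uw1 Vw2]]] := clp (U `*` V) nUV.
exact: H Uw1 Vw2 w12.
Qed.

Lemma lawson_nbhs {d} {X : porderType d} (V : set X) (z : X) :
  @bicontinuous d X -> lawson_basic V -> V z ->
  nbhs (z : interval_topology X) V.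
Proof.
move=> hb [x [F [finF ->]]] [xz nFz].
have [F1 eF] := (finite_fsetP (T := X)).1 finF.
have [e ze] := ex_above z hb.
have h1 : nbhs (z : interval_topology X) (open_interval x e) by exact: itv_nbhs.
have h2 : nbhs (z : interval_topology X)
    (\bigcap_(y in [set` F1]) [set w | ~ y <= w]).
  apply: filter_bigI => y yF1.
  have nyz : ~ y <= z by move=> yz; apply: nFz; exists y => //; rewrite eF.
  have [U hU [W hW H]] := N3 y z hb nyz.
  apply: filterS hW => w Ww; exact: H (nbhs_singleton hU) Ww.
apply: filterS (filterI h1 h2) => w [[xw _] Hw]; split => //.
by move=> [y Fy yw]; move: Fy; rewrite eF => Fy; exact: Hw y Fy yw.
Qed.

Lemma lawson_sub {d} {X : porderType d} : @bicontinuous d X ->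
  forall U : set X, @open (lawson_topology X) U -> @open (interval_topology X) U.
Proof.
move=> hb U [D' sD' <-]; rewrite openE => z [K D'K Kz].
have [F0 sF0 eK] := sD' K D'K.
apply: filterS (_ : nbhs (z : interval_topology X) K).
  by move=> w Kw; exists K.
rewrite -eK; apply: filter_bigI => i iF0.
apply: lawson_nbhs => //.
  by apply/set_mem/sF0.
by move: Kz; rewrite -eK; apply.
Qed.

Lemma sup_exists {d} {X : porderType d} : globally_hyperbolic X ->
  forall S : set X, directed S -> (exists u, ubound S u) -> exists s, supremums S s.
Proof.
move=> [hb cpt] S [[s0 Ss0] dir] [u ubu].
pose I := [set s | S s /\ s0 <= s].
pose M := fun s : X => [set z : X | s <= z /\ forall v, ubound S v -> z <= v].
pose F := filter_from I M.
have FF : Filter F.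
  apply: filter_from_filter; first by exists s0.
  move=> s t [Ss s0s] [St s0t]; have [r Sr [sr tr]] := dir s t Ss St.
  exists r; first by split => //; exact: le_trans s0s sr.
  move=> z [rz zv]; split; split => //; [exact: le_trans sr rz|exact: le_trans tr rz].
have PF : ProperFilter F.
  apply: filter_from_proper => s [Ss _]; exists s; split => //.
  by move=> v; apply.
have FA : F (closed_interval s0 u).
  by exists s0; [split|move=> z [s0z zv]; split => //; exact: zv].
have [p [_ clp]] := cpt s0 u F PF FA.
exists p; split.
- move=> s Ss; apply: contrapT => nsp.
  have [U hU [V hV H]] := N3 s p hb nsp.
  have [r Sr [sr s0r]] := dir s s0 Ss Ss0.
  have FMr : F (M r) by exists r.
  have [w [[rw _] Vw]] := clp _ _ FMr hV.
  exact: H (nbhs_singleton hU) Vw (le_trans sr rw).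
- move=> v ubv; apply: contrapT => npv.
  have [U hU [V hV H]] := N3 p v hb npv.
  have FM0 : F (M s0) by exists s0.
  have [w [[_ wv] Uw]] := clp _ _ FM0 hU.
  exact: H Uw (nbhs_singleton hV) (wv v ubv).
Qed.

Lemma inf_exists {d} {X : porderType d} : globally_hyperbolic X ->
  forall S : set X, filtered S -> (exists l, lbound S l) -> exists i, infimums S i.
Proof.
move=> [hb cpt] S [[s0 Ss0] fil] [l lbl].
pose I := [set s | S s /\ s <= s0].
pose M := fun s : X => [set z : X | z <= s /\ forall v, lbound S v -> v <= z].
pose F := filter_from I M.
have FF : Filter F.
  apply: filter_from_filter; first by exists s0.
  move=> s t [Ss s0s] [St s0t]; have [r Sr [sr tr]] := fil s t Ss St.
  exists r; first by split => //; exact: le_trans sr s0s.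
  move=> z [rz zv]; split; split => //; [exact: le_trans rz sr|exact: le_trans rz tr].
have PF : ProperFilter F.
  apply: filter_from_proper => s [Ss _]; exists s; split => //.
  by move=> v; apply.
have FA : F (closed_interval l s0).
  by exists s0; [split|move=> z [zs0 vz]; split => //; exact: vz].
have [p [_ clp]] := cpt l s0 F PF FA.
exists p; split.
- move=> s Ss; apply: contrapT => nps.
  have [U hU [V hV H]] := N3 p s hb nps.
  have [r Sr [rs rs0]] := fil s s0 Ss Ss0.
  have FMr : F (M r) by exists r.
  have [w [[wr _] Uw]] := clp _ _ FMr hU.
  exact: H Uw (nbhs_singleton hV) (le_trans wr rs).
- move=> v lbv; apply: contrapT => nvp.
  have [U hU [V hV H]] := N3 v p hb nvp.
  have FM0 : F (M s0) by exists s0.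
  have [w [[_ vw] Vw]] := clp _ _ FM0 hV.
  exact: H (nbhs_singleton hU) Vw (vw v lbv).
Qed.

Theorem mainTheorem1 (d : Order.disp_t) (X : porderType d) :
  globally_hyperbolic X ->
  (locally_compact [set: interval_topology X] /\
   hausdorff_space (interval_topology X)) /\
  [/\ (forall U : set X, @open (lawson_topology X) U ->
                         @open (interval_topology X) U),
      closed [set p : interval_topology X * interval_topology X | p.1 <= p.2],
      (forall S : set X, directed S -> (exists u, ubound S u) ->
                         exists s, supremums S s)
    & (forall S : set X, filtered S -> (exists l, lbound S l) ->
                         exists i, infimums S i)].
Proof.
move=> gh; have [hb cpt] := gh.
have hs := hausdorffX hb.
split; last first.
  split; [exact: lawson_sub|exact: order_closed|exact: sup_exists|exact: inf_exists].
split => //.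
move=> x _; rewrite withinET.
have [c cx] := ex_below x hb; have [e xe] := ex_above x hb.
exists (closed_interval c e).

  have h := itv_nbhs c e x cx xe; apply: (filterS _ h) => w [cw we].
  by split; apply: wb_le.
split; first exact: cpt.
exact: compact_closed hs (cpt c e).
Qed.
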